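(* Let $E$ be the group with presentation $\langle t,u,v\mid t^2=1,\ u^2=v^2,\ tut^{-1}=u^{-1},\ tv=vt,\ uv=vu\rangle$, and let $\{T,U,V\}$ be the basis of $H^1(E;\mathbb{F}_2)$ dual to the images of $t,u,v$ in $H_1(E;\mathbb{F}_2)$. Then $TU+U^2+V^2=0$ in $H^2(E;\mathbb{F}_2)$.
   Context: Products are cup products. *)

(* Defs.v *)
From HB Require Import structures.
From mathcomp Require Import all_boot all_order all_algebra.
Set Implicit Arguments. Unset Strict Implicit. Unset Printing Implicit Defensive.
Import GRing.Theory.
Local Open Scope ring_scope.

Structure grp := Grp {
  gcar :> Type;
  gmul : gcar -> gcar -> gcar;
  gone : gcar;
  ginv : gcar -> gcar;
  gmulA : forall x y z, gmul x (gmul y z) = gmul (gmul x y) z;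
  gmul1 : forall x, gmul gone x = x;
  gmulV : forall x, gmul (ginv x) x = gone
}.

Definition ghom (G H : grp) (f : G -> H) : Prop :=
  forall x y, f (gmul x y) = gmul (f x) (f y).

Definition E_relations (G : grp) (t u v : G) : Prop :=
  [/\ gmul t t = gone G,
      gmul u u = gmul v v,
      gmul (gmul t u) (ginv t) = ginv u,
      gmul t v = gmul v t
    & gmul u v = gmul v u].

(* (G; t, u, v) is the group with presentation
   < t, u, v | t^2 = 1, u^2 = v^2, t u t^-1 = u^-1, t v = v t, u v = v u >,
   i.e. it satisfies the universal property of the presented group. *)
Definition is_E_presentation (G : grp) (t u v : G) : Prop :=
  E_relations t u v /\
  forall (H : grp) (a b c : H), E_relations a b c ->
    exists f : G -> H,
      [/\ ghom f, f t = a, f u = b, f v = c &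
          forall g : G -> H, ghom g -> g t = a -> g u = b -> g v = c ->
            forall x, g x = f x].

(* Group cohomology with trivial coefficients F_2, via inhomogeneous cochains. *)
(* 1-cocycles (= H^1, since 1-coboundaries vanish for trivial coefficients). *)
Definition cocycle1 (G : grp) (a : G -> 'F_2) : Prop :=
  forall g h, a (gmul g h) = a g + a h.

Definition cup11 (G : grp) (a b : G -> 'F_2) : G -> G -> 'F_2 :=
  fun g h => a g * b h.

Definition coboundary2 (G : grp) (c : G -> G -> 'F_2) : Prop :=
  exists f : G -> 'F_2, forall g h, c g h = f h - f (gmul g h) + f g.

Definition H2_class_zero (G : grp) (c : G -> G -> 'F_2) : Prop := coboundary2 c.

(* Main.v *)
Require Import Defs.
From mathcomp Require Import all_boot all_order all_algebra.
From mathcomp Require Import ring.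
Local Open Scope ring_scope.
Import GRing.Theory.

Lemma F2_addxx (x : 'F_2) : x + x = 0.
Proof. by case: x => [[|[|n]] Hn] //; apply/val_inj. Qed.

Lemma F2_eq (a b : 'F_2) : a + b = 0 -> a = b.
Proof.
move=> h; have -> : a = a + (b + b) by rewrite F2_addxx addr0.
by rewrite addrA h add0r.
Qed.

Section Ext.
Variables (E : grp) (T U V : E -> 'F_2).
Hypotheses (hT : cocycle1 T) (hU : cocycle1 U) (hV : cocycle1 V).

Definition cc (g h : E) : 'F_2 := T g * U h + U g * U h + V g * V h.

Lemma coc1 (A : E -> 'F_2) : cocycle1 A -> A (gone E) = 0.
Proof.
move=> hA; have := hA (gone E) (gone E); rewrite gmul1 => h.
by rewrite h F2_addxx.
Qed.

Definition Hmul (x y : E * 'F_2) : E * 'F_2 :=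
  (gmul x.1 y.1, x.2 + y.2 + cc x.1 y.1).
Definition Hone : E * 'F_2 := (gone E, 0).
Definition Hinv (x : E * 'F_2) : E * 'F_2 := (ginv x.1, x.2 + cc (ginv x.1) x.1).

Lemma HmulA x y z : Hmul x (Hmul y z) = Hmul (Hmul x y) z.
Proof.
case: x => g a; case: y => h b; case: z => k d; rewrite /Hmul /= gmulA.
congr pair; rewrite /cc !(hT, hU, hV); ring.
Qed.

Lemma Hmul1 x : Hmul Hone x = x.
Proof.
case: x => h b; rewrite /Hmul /cc /= gmul1 !coc1 //.
by rewrite !mul0r add0r !addr0.
Qed.

Lemma HmulV x : Hmul (Hinv x) x = Hone.
Proof.
case: x => h b; rewrite /Hmul /Hinv /= gmulV; congr pair.
by rewrite -addrA F2_addxx.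
Qed.

Definition Hgrp : grp := Grp HmulA Hmul1 HmulV.
End Ext.

Theorem lemma6 (E : grp) (t u v : E) (T U V : E -> 'F_2) :
  is_E_presentation t u v ->
  cocycle1 T -> cocycle1 U -> cocycle1 V ->
  T t = 1 -> T u = 0 -> T v = 0 ->
  U t = 0 -> U u = 1 -> U v = 0 ->
  V t = 0 -> V u = 0 -> V v = 1 ->
  H2_class_zero (fun g h => cup11 T U g h + cup11 U U g h + cup11 V V g h).
Proof.
move=> [Erel univ] hT hU hV Tt Tu Tv Ut Uu Uv Vt Vu Vv.
have inv1 : forall (A : E -> 'F_2), cocycle1 A -> forall g, A (ginv g) = A g.
  move=> A hA g; apply: F2_eq; rewrite -hA gmulV; exact: coc1.
pose H := @Hgrp E T U V hT hU hV.
have rel : @E_relations H (t, 0) (u, 0) (v, 0).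
  case: Erel => e1 e2 e3 e4 e5.
  split; rewrite /= /Hmul /Hinv /cc /=.
  - by rewrite e1 Tt Ut Vt; congr pair; apply/eqP.
  - by rewrite e2 Tu Uu Vu Tv Uv Vv; congr pair; apply/eqP.
  - rewrite e3 !(hT, hU, hV) !(inv1 _ hT, inv1 _ hU, inv1 _ hV) Tt Ut Vt Tu Uu Vu.
    by congr pair; apply/eqP.
  - by rewrite e4 Tt Ut Vt Tv Uv Vv; congr pair; apply/eqP.
  - by rewrite e5 Tu Uu Vu Tv Uv Vv; congr pair; apply/eqP.
case: (univ H _ _ _ rel) => f [fhom ft fu fv _].
case: (univ E t u v Erel) => f0 [_ _ _ _ uniq0].
have pid : forall x, (f x).1 = x.
  move=> x.
  have h1 : (f x).1 = f0 x.
    apply: (uniq0 (fun y => (f y).1)).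
    - by move=> y z /=; rewrite fhom.
    - by rewrite ft.
    - by rewrite fu.
    - by rewrite fv.
  have h2 : id x = f0 x by apply: uniq0.
  exact: (etrans h1 (esym h2)).
exists (fun x => (f x).2) => g h.
have := congr1 snd (fhom g h); rewrite /= !pid => ->.
rewrite /cup11 /cc.
set X := (T g * U h + U g * U h + V g * V h).
have -> : (f h).2 - ((f g).2 + (f h).2 + X) + (f g).2 = - X by ring.
by apply: F2_eq; rewrite addrN.
Qed.
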